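(* The Krull dimension of $\mathcal{S}'(\mathbb{Z}^{d})$ is infinite: for every $N\in\mathbb{N}$ there exist prime ideals $\mathfrak{p}_{N+1}\subsetneq\mathfrak{p}_N\subsetneq\cdots\subsetneq\mathfrak{p}_1$ of $\mathcal{S}'(\mathbb{Z}^{d})$, all proper.
   Context: For $\mathbf{n}=(n_1,\dots,n_d)\in\mathbb{Z}^d$ write $\|\mathbf{n}\|:=|n_1|+\cdots+|n_d|$. $\mathcal{S}'(\mathbb{Z}^{d})$ denotes the set of all maps $f:\mathbb{Z}^d\to\mathbb{C}$ of at most polynomial growth, i.e. for which there exist a real $M>0$ and an integer $m\geq 0$ with $|f(\mathbf{n})|\leq M(1+\|\mathbf{n}\|)^m$ for all $\mathbf{n}\in\mathbb{Z}^d$. It is a commutative unital ring under pointwise addition and multiplication. The Krull dimension of a commutative ring is the supremum of the lengths of chains of distinct proper prime ideals. *)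

(* Defs.v *)
From mathcomp Require Import all_boot all_algebra.
From mathcomp Require Import reals.
From mathcomp Require Export complex.
Set Implicit Arguments. Unset Strict Implicit. Unset Printing Implicit Defensive.
Import GRing.Theory Num.Theory.
Local Open Scope ring_scope.

Definition Zd (d : nat) := 'I_d -> int.

Definition norm1 (d : nat) (n : Zd d) : nat := (\sum_(i < d) `|n i|)%N.

Definition Fun (R : realType) (d : nat) := Zd d -> R[i].

(* S'(Z^d): maps of at most polynomial growth *)
Definition tempered (R : realType) (d : nat) (f : Fun R d) : Prop :=
  exists (M : R) (m : nat), 0 < M /\
    forall n : Zd d, `|f n| <= ((M * ((1 + norm1 n)%:R) ^+ m)%:C)%C.

Definition fadd (R : realType) (d : nat) (f g : Fun R d) : Fun R d := fun n => f n + g n.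
Definition fmul (R : realType) (d : nat) (f g : Fun R d) : Fun R d := fun n => f n * g n.
Definition fzero (R : realType) (d : nat) : Fun R d := fun _ => 0.
Definition fone (R : realType) (d : nat) : Fun R d := fun _ => 1.

Definition is_ideal (R : realType) (d : nat) (P : Fun R d -> Prop) : Prop :=
  [/\ (forall f, P f -> tempered f),
      P (@fzero R d),
      (forall f g, P f -> P g -> P (fadd f g))
    & (forall a f, tempered a -> P f -> P (fmul a f))].

Definition is_prime_ideal (R : realType) (d : nat) (P : Fun R d -> Prop) : Prop :=
  [/\ is_ideal P,
      ~ P (@fone R d)
    & (forall f g, tempered f -> tempered g -> P (fmul f g) -> P f \/ P g)].

Definition strict_subset (R : realType) (d : nat) (P Q : Fun R d -> Prop) : Prop :=
  (forall f, P f -> Q f) /\ (exists f, Q f /\ ~ P f).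

(* Main.v *)
Require Import Defs.
From mathcomp Require Import all_boot all_algebra.
From mathcomp Require Import reals complex order.
From Stdlib Require Import Classical.
From mathcomp Require boolp classical_sets filter.
Import Order.TTheory GRing.Theory Num.Theory.
Local Open Scope ring_scope.


Module UF.
Import boolp classical_sets filter.
Local Open Scope classical_set_scope.
Lemma exists_U : exists U : (nat -> Prop) -> Prop,
  [/\ (forall K, U (fun n => (K <= n)%N)),
      (forall A B, U A -> U B -> U (fun n => A n /\ B n)),
      (forall A B : nat -> Prop, (forall n, A n -> B n) -> U A -> U B),
      ~ U (fun _ => False)
    & (forall A, U A \/ U (fun n => ~ A n))].
Proof.
have [G [GU sub]] := ultraFilterLemma eventually_filter.
exists G; split.
- by move=> K; apply: sub; exists K.
- move=> A B hA hB; exact: (filterI hA hB).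
- move=> A B hAB hA; exact: (filterS hAB hA).
- move=> h; have := @filter_not_empty _ G _. by apply; rewrite (_ : set0 = fun _ => False).
- move=> A; exact: (in_ultra_setVsetC A GU).
Qed.
End UF.

Definition pt (d : nat) (n : nat) : Zd d := fun i => if val i == 0%N then (n%:Z) else 0.

Lemma norm1_pt d (hd : (0 < d)%N) n : norm1 (pt d n) = n.
Proof.
case: d hd => // d _; rewrite /norm1 big_ord_recl /pt /=.
rewrite big1 ?addn0 // => i _.
Qed.

Definition w (R : realType) (j r n : nat) : R[i] := ((n.+1) ^ (r * n ^ j))%:R.

Lemma w_ge0 (R : realType) j r n : 0 <= w R j r n.
Proof. by rewrite /w ler0n. Qed.

Lemma w_ge1 (R : realType) j r n : 1 <= w R j r n.
Proof. by rewrite /w ler1n expn_gt0. Qed.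

Lemma wD (R : realType) j r s n : w R j (r + s) n = w R j r n * w R j s n.
Proof. by rewrite /w mulnDl expnD natrM. Qed.

Lemma w_ge2 (R : realType) j n : (1 <= n)%N -> 2%:R <= w R j 1 n.
Proof.
move=> hn; rewrite /w ler_nat mul1n.
apply: (@leq_trans (n.+1 ^ 1)); first by rewrite expn1 ltnS.
by apply: leq_pexp2l => //; rewrite expn_gt0 (leq_trans _ hn).
Qed.


Lemma w_mono (R : realType) j r n : (r <= n)%N -> w R j r n <= w R j.+1 1 n.
Proof.
move=> hr; rewrite /w ler_nat leq_pexp2l // mul1n expnSr mulnC leq_mul2l; by apply/orP; right.
Qed.
Lemma w_big (R : realType) j m n : (1 <= n)%N -> ((n.+1)%:R : R[i]) ^+ m.+1 <= w R j m.+1 n.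
Proof.
move=> hn; rewrite /w -natrX ler_nat leq_pexp2l //.
rewrite -{1}(muln1 m.+1) leq_mul2l.
by apply/orP; right; rewrite expn_gt0 hn.
Qed.

Definition B (R : realType) {d} (x : Zd d) : R[i] := ((1 + norm1 x)%N)%:R.

Lemma BE (R : realType) d (x : Zd d) M m :
  ((M * ((1 + norm1 x)%:R) ^+ m)%:C)%C = M%:C%C * (B R x) ^+ m.
Proof. by rewrite rmorphM rmorphXn /= rmorph_nat. Qed.

Lemma B_ge1 (R : realType) d (x : Zd d) : 1 <= B R x.
Proof. by rewrite /B ler1n. Qed.

Lemma tempered_add (R : realType) d (f g : Fun R d) :
  tempered f -> tempered g -> tempered (fadd f g).
Proof.
move=> [M1 [m1 [hM1 hf]]] [M2 [m2 [hM2 hg]]].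
exists (M1 + M2), (m1 + m2)%N; split; first by rewrite addr_gt0.
move=> x; rewrite BE /fadd; move: (hf x) (hg x); rewrite !BE => h1 h2.
apply: le_trans (ler_normD _ _) _.
rewrite rmorphD mulrDl; apply: lerD.
  apply: le_trans h1 _; apply: ler_wpM2l; first by rewrite ler0c ltW.
  by apply: ler_weXn2l; [apply: B_ge1| apply: leq_addr].
apply: le_trans h2 _; apply: ler_wpM2l; first by rewrite ler0c ltW.
by apply: ler_weXn2l; [apply: B_ge1| apply: leq_addl].
Qed.

Lemma tempered_mul (R : realType) d (f g : Fun R d) :
  tempered f -> tempered g -> tempered (fmul f g).
Proof.
move=> [M1 [m1 [hM1 hf]]] [M2 [m2 [hM2 hg]]].
exists (M1 * M2), (m1 + m2)%N; split; first by rewrite mulr_gt0.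
move=> x; rewrite BE /fmul; move: (hf x) (hg x); rewrite !BE => h1 h2.
rewrite normrM rmorphM exprD mulrACA.
by apply: ler_pM => //; apply: normr_ge0.
Qed.

Definition isU (U : (nat -> Prop) -> Prop) :=
  [/\ (forall K, U (fun n => (K <= n)%N)),
      (forall A B, U A -> U B -> U (fun n => A n /\ B n)),
      (forall A B : nat -> Prop, (forall n, A n -> B n) -> U A -> U B),
      ~ U (fun _ => False)
    & (forall A, U A \/ U (fun n => ~ A n))].

Definition J (R : realType) d (U : (nat -> Prop) -> Prop) (j : nat) (f : Fun R d) : Prop :=
  tempered f /\ forall r, U (fun n => `|f (pt d n)| * w R j r n <= 1).

Lemma Uempty {U} {A} : isU U -> U A -> (forall n, A n -> False) -> False.
Proof. by case=> _ _ hm hp _ hA hn; apply: hp; apply: hm hA. Qed.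

Lemma J_prime (R : realType) d (hd : (0 < d)%N) U j : isU U -> is_prime_ideal (J R d U j).
Proof.
move=> hU; have [hK hI hM hP hUl] := hU.
have hnn : forall (z : R[i]) r n, 0 <= `|z| * w R j r n.
  by move=> z r n; rewrite mulr_ge0 // ?normr_ge0 ?w_ge0.
split; first split.
- by move=> f [].
- split.
    exists 1, 0%N; split => // x; by rewrite /fzero normr0 expr0 mulr1 rmorph1 ler01.
  by move=> r; apply: (hM _ _ _ (hK 0%N)) => n _; rewrite /fzero normr0 mul0r ler01.
- move=> f g [tf hf] [tg hg]; split; first exact: tempered_add.
  move=> r; apply: hM (hI _ _ (hI _ _ (hf r.+1) (hg r.+1)) (hK 1%N)).
  move=> n [[h1 h2] hn].
  have h2w : 2%:R <= w R j 1 n by apply: w_ge2.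
  rewrite -(ler_pM2r (_ : 0 < 2%:R :> R[i])) ?ltr0n // mul1r.
  apply: le_trans (_ : (`|f (pt d n)| + `|g (pt d n)|) * w R j r n * w R j 1 n <= _).
    apply: ler_pM; [exact: hnn | by rewrite ler0n | | exact: h2w].
    by apply: ler_wpM2r; [apply: w_ge0 | apply: ler_normD].
  rewrite !mulrDl -!mulrA -!wD addn1 mulr2n.
  exact: lerD.
- move=> a f ta [tf hf]; split; first exact: tempered_mul.
  have [M [m [hM0 ha]]] := ta.
  set K := Num.Def.archi_bound M.
  have hMK : M <= K%:R by apply: ltW; apply: archi_boundP; apply: ltW.
  move=> r; apply: hM (hI _ _ (hI _ _ (hf (r + m.+1)%N) (hK 1%N)) (hK K)).
  move=> n [[h1 hn] hKn].
  have hb : `|a (pt d n)| <= w R j m.+1 n.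
    apply: le_trans (ha (pt d n)) _; rewrite BE /B norm1_pt // add1n.
    have hw := w_big R j m n hn; apply: le_trans hw; rewrite exprS ler_wpM2r //.
      by apply: exprn_ge0; apply: ler0n.
    have hK2 : M%:C%C <= (K%:R : R)%:C%C by rewrite lecR.
    apply: le_trans hK2 _.
    by rewrite rmorph_nat ler_nat (leq_trans hKn).
  apply: (le_trans _ h1); rewrite /fmul normrM wD mulrA [`|a _| * _]mulrC mulrAC.
  by apply: ler_wpM2l; [exact: hnn | exact: hb].
- by move=> [_ /(_ 1%N) h1]; apply: (Uempty hU (hI _ _ h1 (hK 1%N))) => n [h hn];
    move: h; rewrite /fone normr1 mul1r; apply/negP; rewrite -real_ltNge ?real1 ?realn //;
    apply: lt_le_trans (w_ge2 R j n hn); rewrite ltr1n.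
- move=> f g tf tg [_ hfg].
  have hreal : forall (z : R[i]) r n, `|z| * w R j r n \is Num.real.
    by move=> z r n; rewrite realM ?normr_real // /w realn.
  case: (classic (forall r, U (fun n => `|f (pt d n)| * w R j r n <= 1))) => hf.
    by left.
  case: (classic (forall r, U (fun n => `|g (pt d n)| * w R j r n <= 1))) => hg.
    by right.
  have [r hr] := not_all_ex_not _ _ hf.
  have [s hs] := not_all_ex_not _ _ hg.
  have hr' : U (fun n => ~ (`|f (pt d n)| * w R j r n <= 1)) by case: (hUl (fun n => `|f (pt d n)| * w R j r n <= 1)).
  have hs' : U (fun n => ~ (`|g (pt d n)| * w R j s n <= 1)) by case: (hUl (fun n => `|g (pt d n)| * w R j s n <= 1)).
  exfalso; apply: (Uempty hU (hI _ _ (hI _ _ hr' hs') (hfg (r + s)%N))) => n [[h1 h2] h3].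
  move/negP: h1; rewrite -real_ltNge ?real1 ?hreal // => h1.
  move/negP: h2; rewrite -real_ltNge ?real1 ?hreal // => h2.
  have := mulr_egt1 h1 h2; rewrite -mulrACA -wD -normrM => h4.
  by move: h3; rewrite /fmul lt_geF.
Qed.

Lemma J_strict (R : realType) d (hd : (0 < d)%N) U j : isU U ->
  strict_subset (J R d U j.+1) (J R d U j).
Proof.
move=> hU; have [hK hI hM hP hUl] := hU.
have wpos : forall r n, 0 < w R j.+1 r n by move=> r n; apply: lt_le_trans ltr01 (w_ge1 _ _ _ _).
split.
  move=> f [tf hf]; split => // r.
  apply: hM (hI _ _ (hf 1%N) (hK r)) => n [h1 hn].
  apply: le_trans h1; apply: ler_wpM2l; first exact: normr_ge0.
  exact: w_mono.
pose g : Fun R d := fun x => (((norm1 x).+1 ^ (norm1 x ^ j.+1))%:R)^-1.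
have hgn : forall n, `|g (pt d n)| = (w R j.+1 1 n)^-1.
  by move=> n; rewrite /g norm1_pt // normfV normr_nat /w mul1n.
have tg : tempered g.
  exists 1, 0%N; split => // x; rewrite expr0 mulr1 rmorph1 /g normfV normr_nat.
  by rewrite invf_le1 ?ltr0n ?ler1n expn_gt0.
exists g; split.
  split => // r; apply: hM (hK r) => n hn; rewrite hgn.
  apply: (le_trans (ler_wpM2l _ (w_mono R j r n hn))).
    by rewrite invr_ge0 ltW.
  by rewrite mulVf // gt_eqF.
move=> [_ /(_ 2%N) h2]; apply: (Uempty hU (hI _ _ h2 (hK 1%N))) => n [h hn].
move: h; rewrite hgn (wD R j.+1 1 1) mulrA mulVf ?gt_eqF // mul1r => h.
have := le_trans (w_ge2 R j.+1 n hn) h.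
by rewrite [X in _ <= X -> _](_ : _ = 1%:R) // ler_nat.
Qed.

Theorem theorem4p4 (R : realType) (d : nat) (hd : (0 < d)%N) (N : nat) :
  exists p : nat -> (Fun R d -> Prop),
    (forall k : nat, (1 <= k <= N.+1)%N -> is_prime_ideal (p k)) /\
    (forall k : nat, (1 <= k <= N)%N -> strict_subset (p k.+1) (p k)).
Proof.
have [U hU] := UF.exists_U.
exists (fun k => J R d U k.-1); split.
  by move=> k _; apply: J_prime.
move=> [|k] // _ /=; exact: J_strict.
Qed.
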